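(* In the setting described in the context: (i) Type A blowup occurs if and only if either ($0<v_0<1$ and $\omega_0>-\frac{\nu}{2}f_0(v_0)$) or ($v_0>1$ and $\omega_0<-\frac{\nu}{2}f_0(v_0)$). (ii) Type B blowup occurs if and only if either ($0<v_0<1$ and $\omega_0<-\frac{\nu}{2}f_\infty(v_0)$) or ($v_0>1$ and $\omega_0>-\frac{\nu}{2}f_\infty(v_0)$). (iii) In either blowup type, $\|\omega(\cdot,t)\|_{L^2}\to\infty$ and $\|\omega(\cdot,t)\|_{B_0}\to\infty$ as $t\to t_c^-$. (iv) If either ($0<v_0<1$ and $-\frac{\nu}{2}f_\infty(v_0)\le\omega_0\le-\frac{\nu}{2}f_0(v_0)$) or ($v_0>1$ and $-\frac{\nu}{2}f_0(v_0)\le\omega_0\le-\frac{\nu}{2}f_\infty(v_0)$), then neither type of blowup occurs and $v_c(t)\in(0,\infty)$ for all $t>0$, so the solution exists globally.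
   Context: Fix $\nu>0$, $v_0>0$ with $v_0\neq1$, and $\omega_0\in\mathbb{R}$. Consider the real ODE system $\frac{d\omega_{-2,i}}{dt}=\omega_{-2,i}^2\frac{1-2v_c^2+5v_c^4}{4v_c^2(1-v_c^2)^2}-\nu\omega_{-2,i}$, $\frac{dv_c}{dt}=-\omega_{-2,i}\frac{1+v_c^2}{4v_c(1-v_c^2)}$ with $v_c(0)=v_0$, $\omega_{-2,i}(0)=\omega_0$; its solution (continued through $v_c=1$) is characterized as follows. Let $F(v)=\frac{v(v^2-1)}{(v^2+1)^2}+\arctan v$, which is a strictly increasing bijection from $(0,\infty)$ onto $(0,\pi/2)$, and let $G(t)=F(v_0)+\frac{2\omega_0 v_0(1-e^{-\nu t})}{\nu(v_0^2-1)(v_0^2+1)^2}$. Then $v_c(t)$ is defined by $F(v_c(t))=G(t)$ for as long as $G(t)\in(0,\pi/2)$, and $\omega_{-2,i}(t)=\omega_0e^{-\nu t}\frac{v_0}{v_c(t)}\frac{v_c(t)^2-1}{v_0^2-1}\left(\frac{v_c(t)^2+1}{v_0^2+1}\right)^2$. Type A blowup means: there is a finite $t_c>0$ with $v_c(t)>0$ on $[0,t_c)$ and $v_c(t)\to0^+$ as $t\to t_c^-$. Type B blowup means: there is a finite $t_c>0$ with $v_c(t)\in(0,\infty)$ on $[0,t_c)$ and $v_c(t)\to+\infty$ as $t\to t_c^-$. Here $f_0(x)=(x^2-1)^2+\frac{(x^2+1)^2}{x}(x^2-1)\arctan(x)$ and $f_\infty(x)=(x^2-1)^2+\frac{(x^2+1)^2}{x}(x^2-1)\left(\arctan(x)-\frac{\pi}{2}\right)$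 for $x>0$. The associated $2\pi$-periodic real function is $\omega(x,t)=\omega_-(x,t)+\overline{\omega_-(\bar x,t)}$, where, with $X=\tan(x/2)$, $\omega_{-2}=\mathrm{i}\omega_{-2,i}$ and $\omega_{-1}=\frac{2\mathrm{i}v_c}{1-v_c^2}\omega_{-2}$, $\omega_-(x,t)=\omega_{-1}\left[\frac{1}{X-\mathrm{i}v_c}-\frac{1}{-\mathrm{i}-\mathrm{i}v_c}\right]+\omega_{-2}\left[\frac{1}{(X-\mathrm{i}v_c)^2}-\frac{1}{(-\mathrm{i}-\mathrm{i}v_c)^2}\right]$. Norms: $\|f\|_{L^2}^2=\int_{-\pi}^{\pi}|f|^2dx$ and $\|f\|_{B_0}=\sum_{k\in\mathbb{Z}}|\hat f_k|$ with $\hat f_k=\frac{1}{2\pi}\int_{-\pi}^{\pi}f(x)e^{-\mathrm{i}kx}dx$. *)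

(* Defs.v *)
From Stdlib Require Import Reals ClassicalEpsilon.
From Coquelicot Require Import Coquelicot.
Open Scope R_scope.

Definition Ffun (v : R) : R := v * (v ^ 2 - 1) / (v ^ 2 + 1) ^ 2 + atan v.

Definition Gfun (nu v0 w0 t : R) : R :=
  Ffun v0 + 2 * w0 * v0 * (1 - exp (- nu * t)) / (nu * (v0 ^ 2 - 1) * (v0 ^ 2 + 1) ^ 2).

Definition defined_at (nu v0 w0 t : R) : Prop := 0 < Gfun nu v0 w0 t < PI / 2.

(* v_c(t): the (unique, F being a bijection (0,oo) -> (0,pi/2)) v > 0 with
   F(v) = G(t); an arbitrary value when G(t) is out of range (never used there). *)
Definition vc (nu v0 w0 t : R) : R :=
  epsilon (inhabits 0) (fun v => 0 < v /\ Ffun v = Gfun nu v0 w0 t).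

Definition w2i (nu v0 w0 t : R) : R :=
  let v := vc nu v0 w0 t in
  w0 * exp (- nu * t) * (v0 / v) * ((v ^ 2 - 1) / (v0 ^ 2 - 1))
     * ((v ^ 2 + 1) / (v0 ^ 2 + 1)) ^ 2.

Definition omega_minus (nu v0 w0 x t : R) : C :=
  let v := vc nu v0 w0 t in
  let X : C := RtoC (tan (x / 2)) in
  let om2 : C := Cmult Ci (RtoC (w2i nu v0 w0 t)) in
  let om1 : C := Cmult (Cdiv (Cmult (RtoC 2) (Cmult Ci (RtoC v))) (RtoC (1 - v ^ 2))) om2 in
  let d : C := Cminus X (Cmult Ci (RtoC v)) in
  let e : C := Cminus (Copp Ci) (Cmult Ci (RtoC v)) in
  Cplus (Cmult om1 (Cminus (Cinv d) (Cinv e)))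
        (Cmult om2 (Cminus (Cinv (Cmult d d)) (Cinv (Cmult e e)))).

(* omega(x,t) = omega_-(x,t) + conj(omega_-(conj x, t)); for real x, conj x = x,
   and the result is real, so we take its real part (imaginary part is 0). *)
Definition omega (nu v0 w0 x t : R) : R :=
  fst (Cplus (omega_minus nu v0 w0 x t) (Cconj (omega_minus nu v0 w0 x t))).

Definition L2norm (f : R -> R) : R := sqrt (RInt (fun x => (f x) ^ 2) (- PI) PI).

(* |hat f_k| with hat f_k = (1/2pi) int_{-pi}^{pi} f(x) e^{-ikx} dx, f real *)
Definition fourier_coef (f : R -> R) (k : Z) : C :=
  (/ (2 * PI) * RInt (fun x => f x * cos (IZR k * x)) (- PI) PI,
   - (/ (2 * PI) * RInt (fun x => f x * sin (IZR k * x)) (- PI) PI)).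

(* ||f||_{B_0} = sum_{k in Z} |hat f_k|, in [0, +oo] (limit of the nondecreasing
   symmetric partial sums over -N..N). *)
Definition B0norm (f : R -> R) : Rbar :=
  Lim_seq (fun N => sum_f_R0 (fun j => Cmod (fourier_coef f (Z.of_nat j - Z.of_nat N)%Z))
                             (2 * N)).

Definition blowupA_at (nu v0 w0 tc : R) : Prop :=
  0 < tc /\ (forall t, 0 <= t < tc -> defined_at nu v0 w0 t /\ 0 < vc nu v0 w0 t)
  /\ filterlim (vc nu v0 w0) (at_left tc) (at_right 0).

Definition blowupA (nu v0 w0 : R) : Prop := exists tc, blowupA_at nu v0 w0 tc.

Definition blowupB_at (nu v0 w0 tc : R) : Prop :=
  0 < tc /\ (forall t, 0 <= t < tc -> defined_at nu v0 w0 t /\ 0 < vc nu v0 w0 t)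
  /\ filterlim (vc nu v0 w0) (at_left tc) (Rbar_locally p_infty).

Definition blowupB (nu v0 w0 : R) : Prop := exists tc, blowupB_at nu v0 w0 tc.

Definition f0 (x : R) : R :=
  (x ^ 2 - 1) ^ 2 + (x ^ 2 + 1) ^ 2 / x * (x ^ 2 - 1) * atan x.
Definition finf (x : R) : R :=
  (x ^ 2 - 1) ^ 2 + (x ^ 2 + 1) ^ 2 / x * (x ^ 2 - 1) * (atan x - PI / 2).

(* Main.v *)
Require Import Defs.
From Stdlib Require Import Reals Lra Psatz ClassicalEpsilon.
From Coquelicot Require Import Coquelicot.
Open Scope R_scope.

Lemma F_derive x : is_derive Ffun x (8 * x ^ 2 / (x ^ 2 + 1) ^ 3).
Proof.
unfold Ffun.
assert (H : x ^ 2 + 1 <> 0) by nra.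
evar (d : R).
assert (Hd : is_derive (fun v => v * (v ^ 2 - 1) / (v ^ 2 + 1) ^ 2) x d).
{ auto_derive. { nra. } subst d. reflexivity. }
subst d.
eapply is_derive_ext.
{ intro t. reflexivity. }
replace (8 * x ^ 2 / (x ^ 2 + 1) ^ 3) with
  (plus ((1 * (x ^ 2 - 1) + x * (INR 2 * 1 * x ^ 1)) * / ((x ^ 2 + 1) ^ 2) +
   x * (x ^ 2 - 1) * (- (INR 2 * (INR 2 * 1 * x ^ 1) * (x^2+1)^1) / ((x^2+1)^2*(x^2+1)^2))) (/ (1 + x²))).
2:{ unfold plus; simpl. unfold Rsqr. field. nra. }
apply (is_derive_plus (fun v => v * (v ^ 2 - 1) / (v ^ 2 + 1) ^ 2) atan).
- auto_derive. nra. simpl. field. nra.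
- apply is_derive_atan.
Qed.

Lemma F_contpt x : continuity_pt Ffun x.
Proof. apply derivable_continuous_pt. exists (8 * x ^ 2 / (x ^ 2 + 1) ^ 3).
 apply is_derive_Reals. apply F_derive. Qed.

Lemma F_cont x : continuous Ffun x.
Proof. apply continuity_pt_filterlim. apply F_contpt. Qed.

Lemma F_mvt x y : x < y -> exists c, x <= c <= y /\ Ffun y - Ffun x = 8 * c ^ 2 / (c ^ 2 + 1) ^ 3 * (y - x).
Proof.
intros Hxy.
destruct (MVT_gen Ffun x y (fun c => 8 * c ^ 2 / (c ^ 2 + 1) ^ 3)) as [c [Hc Heq]].
- intros; apply F_derive.
- intros; apply F_contpt.
- exists c. rewrite Rmin_left in Hc by lra. rewrite Rmax_right in Hc by lra. split; auto.
Qed.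

Lemma dF_nonneg c : 0 <= 8 * c ^ 2 / (c ^ 2 + 1) ^ 3.
Proof. assert (0 < (c^2+1)^3) by (apply pow_lt; nra).
apply Rmult_le_pos. nra. apply Rlt_le, Rinv_0_lt_compat; auto. Qed.

Lemma dF_pos c : c <> 0 -> 0 < 8 * c ^ 2 / (c ^ 2 + 1) ^ 3.
Proof. intro. assert (0 < (c^2+1)^3) by (apply pow_lt; nra).
apply Rmult_lt_0_compat. assert (0 < c*c) by (apply Rsqr_pos_lt; auto). nra.
apply Rinv_0_lt_compat; auto. Qed.

Lemma F_le x y : x <= y -> Ffun x <= Ffun y.
Proof. intros [H|H]. destruct (F_mvt x y H) as [c [_ E]].
 pose proof (dF_nonneg c). nra. subst; lra. Qed.

Lemma F_lt_pos x y : 0 <= x -> x < y -> Ffun x < Ffun y.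
Proof. intros H0 H.
 assert (Hm : 0 < (x+y)/2) by lra.
 destruct (F_mvt ((x+y)/2) y ltac:(lra)) as [c [Hc E]].
 pose proof (dF_pos c ltac:(lra)).
 pose proof (F_le x ((x+y)/2) ltac:(lra)). nra. Qed.

Lemma F_0 : Ffun 0 = 0.
Proof. unfold Ffun. rewrite atan_0. field. Qed.

Lemma F_pos v : 0 < v -> 0 < Ffun v.
Proof. intro. rewrite <- F_0. apply F_lt_pos; lra. Qed.

Lemma F_inv v : 0 < v -> Ffun (/ v) = PI / 2 - Ffun v.
Proof. intro. unfold Ffun. rewrite atan_inv by auto. field. split; nra. Qed.

Lemma F_ltPI v : 0 < v -> Ffun v < PI / 2.
Proof. intro. pose proof (F_inv v H). pose proof (F_pos (/v) (Rinv_0_lt_compat _ H)). lra. Qed.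

Lemma F_inj u v : 0 <= u -> 0 <= v -> Ffun u = Ffun v -> u = v.
Proof. intros. destruct (Rtotal_order u v) as [h|[h|h]]; auto.
 pose proof (F_lt_pos u v H h); lra. pose proof (F_lt_pos v u H0 h); lra. Qed.

Lemma ball_R x e y : ball x e y <-> Rabs (y - x) < e.
Proof. split; auto. Qed.

Lemma F_small eps : 0 < eps -> exists d, 0 < d /\ forall z, Rabs z < d -> Rabs (Ffun z) < eps.
Proof. intro He. pose proof (F_cont 0) as Hc.
 destruct (proj1 (filterlim_locally _ _) Hc (mkposreal eps He)) as [d Hd].
 exists d. split. apply cond_pos. intros z Hz. specialize (Hd z).
 rewrite F_0 in Hd. rewrite !ball_R in Hd. simpl in Hd.
 replace (Ffun z) with (Ffun z - 0) by ring. apply Hd. rewrite Rminus_0_r. auto. Qed.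

Lemma F_surj y : 0 < y < PI / 2 -> exists v, 0 < v /\ Ffun v = y.
Proof. intro Hy.
 destruct (F_small (PI/2 - y)) as [d [Hd Hz]]. lra.
 set (b := / (d/2)).
 assert (Hb : 0 < b) by (unfold b; apply Rinv_0_lt_compat; lra).
 assert (Fb : y < Ffun b).
 { unfold b. rewrite F_inv by lra. specialize (Hz (d/2)). rewrite Rabs_right in Hz by lra.
   assert (Rabs (Ffun (d/2)) < PI/2 - y) by (apply Hz; lra).
   pose proof (Rle_abs (Ffun (d/2))). lra. }
 destruct (IVT_gen Ffun 0 b y) as [x [Hx Fx]].
 - intro; apply F_contpt.
 - rewrite F_0. rewrite Rmin_left, Rmax_right; lra.
 - exists x. rewrite Rmin_left in Hx by lra. split; auto.
   destruct (proj1 Hx) as [h|h]; auto. rewrite <- h in Fx. rewrite F_0 in Fx. lra.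
Qed.

Lemma vc_spec nu v0 w0 t : defined_at nu v0 w0 t ->
  0 < vc nu v0 w0 t /\ Ffun (vc nu v0 w0 t) = Gfun nu v0 w0 t.
Proof. intro H. unfold vc. apply epsilon_spec. apply F_surj. exact H. Qed.

Definition cG nu v0 w0 := 2 * w0 * v0 / (nu * (v0 ^ 2 - 1) * (v0 ^ 2 + 1) ^ 2).

Lemma v0sq v0 : 0 < v0 -> v0 <> 1 -> v0 ^ 2 - 1 <> 0.
Proof. intros H H1 Hq. apply H1. nra. Qed.

Lemma G_eq nu v0 w0 t : 0 < nu -> 0 < v0 -> v0 <> 1 ->
  Gfun nu v0 w0 t = Ffun v0 + cG nu v0 w0 * (1 - exp (- nu * t)).
Proof. intros. pose proof (v0sq v0 H0 H1). unfold Gfun, cG. field. split; [nra|]. split; lra. Qed.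

Lemma G_contpt nu v0 w0 t : 0 < nu -> 0 < v0 -> v0 <> 1 -> continuity_pt (Gfun nu v0 w0) t.
Proof. intros. pose proof (v0sq v0 H0 H1).
 apply derivable_continuous_pt. eexists. apply is_derive_Reals. unfold Gfun.
 auto_derive. exact I. reflexivity. Qed.

Lemma G_near nu v0 w0 t eps : 0 < nu -> 0 < v0 -> v0 <> 1 -> 0 < eps ->
  exists d, 0 < d /\ forall s, Rabs (s - t) < d -> Rabs (Gfun nu v0 w0 s - Gfun nu v0 w0 t) < eps.
Proof. intros. pose proof (proj1 (continuity_pt_filterlim _ _) (G_contpt nu v0 w0 t H H0 H1)) as Hc.
 destruct (proj1 (filterlim_locally _ _) Hc (mkposreal eps H2)) as [d Hd].
 exists d. split. apply cond_pos. intros s Hs. apply (Hd s). apply ball_R. auto. Qed.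

Lemma condA_iff nu v0 w0 : 0 < nu -> 0 < v0 -> v0 <> 1 ->
  ((0 < v0 < 1 /\ w0 > - (nu / 2) * f0 v0) \/ (v0 > 1 /\ w0 < - (nu / 2) * f0 v0))
  <-> Ffun v0 + cG nu v0 w0 < 0.
Proof. intros Hnu Hv Hv1. pose proof (v0sq v0 Hv Hv1).
 set (P := nu * ((v0^2-1)*(v0^2+1)^2/v0)/2).
 assert (HP : w0 = P * cG nu v0 w0) by (unfold P, cG; field; split; [nra|split; lra]).
 assert (Hf : - (nu / 2) * f0 v0 = - P * Ffun v0) by (unfold P, f0, Ffun; field; nra).
 rewrite Hf. rewrite HP at 1 2.
 assert (Hq : 0 < (v0^2+1)^2/v0) by (apply Rmult_lt_0_compat; [apply pow_lt; nra| apply Rinv_0_lt_compat; auto]).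
 destruct (Rlt_or_le v0 1) as [h|h].
 - assert (P < 0). { unfold P. assert (v0^2 - 1 < 0) by nra.
     replace (nu * ((v0 ^ 2 - 1) * (v0 ^ 2 + 1) ^ 2 / v0) / 2) with (nu * (v0^2-1) * ((v0^2+1)^2/v0) /2) by (field; lra). 
     assert (nu * (v0^2-1) < 0) by nra. nra. }
   split. intros [[_ A]|[B _]]; [nra|lra]. intro. left. split. lra. nra.
 - assert (0 < P). { unfold P. assert (0 < v0^2 - 1) by (destruct h; [nra|congruence]).
     replace (nu * ((v0 ^ 2 - 1) * (v0 ^ 2 + 1) ^ 2 / v0) / 2) with (nu * (v0^2-1) * ((v0^2+1)^2/v0) /2) by (field; lra).
     assert (0 < nu * (v0^2-1)) by nra. nra. }
   split. intros [[A _]|[_ B]]; [lra|nra]. intro. right. split. destruct h; [lra|congruence]. nra.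
Qed.

Lemma condB_iff nu v0 w0 : 0 < nu -> 0 < v0 -> v0 <> 1 ->
  ((0 < v0 < 1 /\ w0 < - (nu / 2) * finf v0) \/ (v0 > 1 /\ w0 > - (nu / 2) * finf v0))
  <-> Ffun v0 + cG nu v0 w0 > PI / 2.
Proof. intros Hnu Hv Hv1. pose proof (v0sq v0 Hv Hv1).
 set (P := nu * ((v0^2-1)*(v0^2+1)^2/v0)/2).
 assert (HP : w0 = P * cG nu v0 w0) by (unfold P, cG; field; split; [nra|split; lra]).
 assert (Hf : - (nu / 2) * finf v0 = - P * (Ffun v0 - PI/2)) by (unfold P, finf, Ffun; field; nra).
 rewrite Hf. rewrite HP at 1 2.
 assert (Hq : 0 < (v0^2+1)^2/v0) by (apply Rmult_lt_0_compat; [apply pow_lt; nra| apply Rinv_0_lt_compat; auto]).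
 destruct (Rlt_or_le v0 1) as [h|h].
 - assert (P < 0). { unfold P. assert (v0^2 - 1 < 0) by nra.
     replace (nu * ((v0 ^ 2 - 1) * (v0 ^ 2 + 1) ^ 2 / v0) / 2) with (nu * (v0^2-1) * ((v0^2+1)^2/v0) /2) by (field; lra). 
     assert (nu * (v0^2-1) < 0) by nra. nra. }
   split. intros [[_ A]|[B _]]; [nra|lra]. intro. left. split. lra. nra.
 - assert (0 < P). { unfold P. assert (0 < v0^2 - 1) by (destruct h; [nra|congruence]).
     replace (nu * ((v0 ^ 2 - 1) * (v0 ^ 2 + 1) ^ 2 / v0) / 2) with (nu * (v0^2-1) * ((v0^2+1)^2/v0) /2) by (field; lra).
     assert (0 < nu * (v0^2-1)) by nra. nra. }
   split. intros [[A _]|[_ B]]; [lra|nra]. intro. right. split. destruct h; [lra|congruence]. nra.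
Qed.

Lemma at_left_intro tc (Q : R -> Prop) :
  (exists d, 0 < d /\ forall t, tc - d < t < tc -> Q t) -> at_left tc Q.
Proof. intros [d [Hd H]]. exists (mkposreal d Hd). intros y Hy Hlt.
 assert (Hy' : Rabs (y - tc) < d) by (apply ball_R in Hy; exact Hy).
 apply Rabs_def2 in Hy'. destruct Hy'. apply H; split; lra. Qed.

Lemma at_left_elim tc (Q : R -> Prop) :
  at_left tc Q -> exists d, 0 < d /\ forall t, tc - d < t < tc -> Q t.
Proof. intros [d H]. exists d. split. apply cond_pos. intros t Ht. apply H.
 apply ball_R. apply Rabs_def1; lra. lra. Qed.

Lemma exp_neg_lt1 x : 0 < x -> exp (- x) < 1.
Proof. intro. rewrite <- exp_0. apply exp_increasing. lra. Qed.

Lemma exp_nonpos_le1 x : 0 <= x -> exp (- x) <= 1.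
Proof. intros [h|h]. left; apply exp_neg_lt1; auto. subst. rewrite Ropp_0, exp_0. lra. Qed.

Section S.
Variables nu v0 w0 : R.
Hypothesis hnu : 0 < nu.
Hypothesis hv0 : 0 < v0.
Hypothesis hv1 : v0 <> 1.

Let G := Gfun nu v0 w0.
Let c := cG nu v0 w0.

Lemma G_at_tc_from_limit tc L :
  0 < tc -> (forall t, 0 <= t < tc -> defined_at nu v0 w0 t /\ 0 < vc nu v0 w0 t) ->
  (forall eps, 0 < eps -> at_left tc (fun t => Rabs (Ffun (vc nu v0 w0 t) - L) < eps)) ->
  Gfun nu v0 w0 tc = L.
Proof.
intros Htc Hdef Hl.
destruct (Req_dec (Gfun nu v0 w0 tc) L) as [e|ne]; auto. exfalso.
set (eps := Rabs (Gfun nu v0 w0 tc - L) / 2).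
assert (He : 0 < eps) by (unfold eps; assert (0 < Rabs (Gfun nu v0 w0 tc - L)) by (apply Rabs_pos_lt; lra); lra).
destruct (G_near nu v0 w0 tc eps hnu hv0 hv1 He) as [d1 [Hd1 H1]].
destruct (at_left_elim _ _ (Hl eps He)) as [d3 [Hd3 H3]].
set (d := Rmin d1 (Rmin d3 tc)).
assert (0 < d) by (unfold d; repeat apply Rmin_pos; auto).
assert (d <= d1 /\ d <= d3 /\ d <= tc) by (unfold d; repeat split; [apply Rmin_l| eapply Rle_trans; [apply Rmin_r|apply Rmin_l] | eapply Rle_trans; [apply Rmin_r|apply Rmin_r]]).
set (t := tc - d / 2).
assert (Ht : 0 <= t < tc) by (unfold t; lra).
destruct (Hdef t Ht) as [Hd _]. destruct (vc_spec _ _ _ _ Hd) as [_ HF].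
specialize (H3 t ltac:(unfold t; lra)). rewrite HF in H3.
specialize (H1 t ltac:(unfold t; rewrite Rabs_left by lra; lra)).
assert (Rabs (Gfun nu v0 w0 tc - L) <= Rabs (Gfun nu v0 w0 t - L) + Rabs (Gfun nu v0 w0 t - Gfun nu v0 w0 tc)).
{ replace (Gfun nu v0 w0 tc - L) with ((Gfun nu v0 w0 t - L) - (Gfun nu v0 w0 t - Gfun nu v0 w0 tc)) by ring.
  eapply Rle_trans. apply Rabs_triang. rewrite Rabs_Ropp. lra. }
unfold eps in *. lra.
Qed.

Lemma A_nec tc : blowupA_at nu v0 w0 tc -> Ffun v0 + c < 0.
Proof.
intros [Htc [Hdef Hlim]].
assert (HG : Gfun nu v0 w0 tc = 0).
{ apply (G_at_tc_from_limit tc 0 Htc Hdef). intros eps He.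
  destruct (F_small eps He) as [d [Hd HF]].
  apply (Hlim (fun z => Rabs (Ffun z - 0) < eps)). exists (mkposreal d Hd). intros y Hy _.
  assert (Hy' : Rabs (y - 0) < d) by (apply ball_R in Hy; exact Hy).
  rewrite Rminus_0_r in *. apply HF; auto. }
rewrite G_eq in HG by auto. fold c in HG.
pose proof (exp_neg_lt1 (nu * tc) ltac:(nra)). pose proof (exp_pos (- nu * tc)).
replace (- (nu * tc)) with (- nu * tc) in H by ring.
pose proof (F_pos v0 hv0). nra.
Qed.

Lemma B_nec tc : blowupB_at nu v0 w0 tc -> Ffun v0 + c > PI / 2.
Proof.
intros [Htc [Hdef Hlim]].
assert (HG : Gfun nu v0 w0 tc = PI / 2).
{ apply (G_at_tc_from_limit tc (PI/2) Htc Hdef). intros eps He.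
  destruct (F_small eps He) as [d [Hd HF]].
  apply (Hlim (fun z => Rabs (Ffun z - PI/2) < eps)). exists (2 / d). intros z Hz.
  assert (0 < z) by (assert (0 < 2/d) by (apply Rdiv_lt_0_compat; lra); lra).
  assert (Hz' : / z < d / 2).
  { apply (Rmult_lt_reg_l z); auto. rewrite Rinv_r by lra.
    apply (Rmult_lt_reg_l (2/d)). apply Rdiv_lt_0_compat; lra.
    replace (2 / d * (z * (d / 2))) with z by (field; lra). lra. }
  pose proof (Rinv_0_lt_compat z H).
  pose proof (F_inv (/ z) H0). rewrite Rinv_inv in H1.
  rewrite H1. replace (PI / 2 - Ffun (/ z) - PI / 2) with (- Ffun (/ z)) by ring.
  rewrite Rabs_Ropp. apply HF. rewrite Rabs_right; lra. }
rewrite G_eq in HG by auto. fold c in HG.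
pose proof (exp_neg_lt1 (nu * tc) ltac:(nra)). pose proof (exp_pos (- nu * tc)).
replace (- (nu * tc)) with (- nu * tc) in H by ring.
pose proof (F_ltPI v0 hv0). nra.
Qed.

Lemma window_exp tc t r : 0 < r < 1 -> tc = - ln r / nu -> 0 <= t < tc ->
  r < exp (- nu * t) <= 1.
Proof. intros Hr Htc Ht. split.
 - rewrite <- (exp_ln r) by lra. apply exp_increasing. subst tc.
   assert (Ht2 : nu * t < nu * (- ln r / nu)) by (apply Rmult_lt_compat_l; lra).
   replace (nu * (- ln r / nu)) with (- ln r) in Ht2 by (field; lra). lra.
 - replace (- nu * t) with (- (nu * t)) by ring. apply exp_nonpos_le1. nra.
Qed.

Lemma tc_pos r : 0 < r < 1 -> 0 < - ln r / nu.
Proof. intros. assert (ln r < 0) by (rewrite <- ln_1; apply ln_increasing; lra).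
 apply Rdiv_lt_0_compat; lra. Qed.

Lemma exp_tc r : 0 < r -> exp (- nu * (- ln r / nu)) = r.
Proof. intros. replace (- nu * (- ln r / nu)) with (ln r) by (field; lra). apply exp_ln; auto. Qed.

Lemma A_suff : Ffun v0 + c < 0 -> blowupA nu v0 w0.
Proof.
intro H. pose proof (F_pos v0 hv0) as HF0. pose proof (F_ltPI v0 hv0) as HF1.
assert (Hc : c < 0) by lra.
set (r := 1 + Ffun v0 / c).
assert (Hr : 0 < r < 1).
{ unfold r. split.
  - apply (Rmult_lt_reg_l (-c)). lra. replace (- c * (1 + Ffun v0 / c)) with (- c - Ffun v0) by (field; lra). lra.
  - assert (Ffun v0 / c < 0). { apply Ropp_lt_cancel. replace (- (Ffun v0 / c)) with (Ffun v0 / - c) by (field; lra). rewrite Ropp_0. apply Rdiv_lt_0_compat; lra. } lra. }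
set (tc := - ln r / nu).
assert (Htc : 0 < tc) by (apply tc_pos; auto).
assert (Hwin : forall t, 0 <= t < tc -> 0 < G t < PI/2).
{ intros t Ht. destruct (window_exp tc t r Hr eq_refl Ht) as [h1 h2].
  unfold G. rewrite G_eq by auto. fold c. unfold r in h1.
  split. 2: nra.
  assert (c * (1 - exp (- nu * t)) > c * (- (Ffun v0 / c))) by nra.
  replace (c * (- (Ffun v0 / c))) with (- Ffun v0) in H0 by (field; lra). lra. }
assert (Hdef : forall t, 0 <= t < tc -> defined_at nu v0 w0 t /\ 0 < vc nu v0 w0 t).
{ intros t Ht. assert (D : defined_at nu v0 w0 t) by (apply Hwin; auto). split; auto. apply vc_spec; auto. }
exists tc. split; [auto|split; auto].
intros P [eps HP].
set (m := Rmin (eps / 2) 1).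
assert (Hm : 0 < m) by (unfold m; apply Rmin_pos; pose proof (cond_pos eps); lra).
assert (Hme : m < eps) by (unfold m; pose proof (Rmin_l (eps/2) 1); pose proof (cond_pos eps); lra).
pose proof (F_pos m Hm) as HFm.
destruct (G_near nu v0 w0 tc (Ffun m) hnu hv0 hv1 HFm) as [d [Hd Hn]].
assert (HGtc : G tc = 0).
{ unfold G. rewrite G_eq by auto. fold c. unfold tc. rewrite exp_tc by lra. unfold r. field. lra. }
apply at_left_intro. exists (Rmin d tc). split. apply Rmin_pos; auto.
intros t Ht. pose proof (Rmin_l d tc). pose proof (Rmin_r d tc).
assert (Ht' : 0 <= t < tc) by lra.
destruct (Hdef t Ht') as [D Hv]. destruct (vc_spec _ _ _ _ D) as [_ HFv].
specialize (Hn t ltac:(rewrite Rabs_left by lra; lra)). fold G in Hn. rewrite HGtc, Rminus_0_r in Hn.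
assert (Hlt : vc nu v0 w0 t < m).
{ destruct (Rlt_or_le (vc nu v0 w0 t) m) as [h|h]; auto. pose proof (F_le _ _ h).
  pose proof (Rle_abs (G t)). unfold G in *. lra. }
apply HP. apply ball_R. simpl. rewrite Rminus_0_r. rewrite Rabs_right; lra. auto.
Qed.

Lemma B_suff : Ffun v0 + c > PI / 2 -> blowupB nu v0 w0.
Proof.
intro H. pose proof (F_pos v0 hv0) as HF0. pose proof (F_ltPI v0 hv0) as HF1.
assert (Hc : c > 0) by lra.
set (r := 1 - (PI / 2 - Ffun v0) / c).
assert (Hr : 0 < r < 1).
{ unfold r. split.
  - apply (Rmult_lt_reg_l c). lra. replace (c * (1 - (PI / 2 - Ffun v0) / c)) with (c - (PI/2 - Ffun v0)) by (field; lra). lra.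
  - assert (0 < (PI / 2 - Ffun v0) / c) by (apply Rdiv_lt_0_compat; lra). lra. }
set (tc := - ln r / nu).
assert (Htc : 0 < tc) by (apply tc_pos; auto).
assert (Hwin : forall t, 0 <= t < tc -> 0 < G t < PI/2).
{ intros t Ht. destruct (window_exp tc t r Hr eq_refl Ht) as [h1 h2].
  unfold G. rewrite G_eq by auto. fold c. unfold r in h1.
  split. nra.
  assert (c * (1 - exp (- nu * t)) < c * ((PI / 2 - Ffun v0) / c)) by nra.
  replace (c * ((PI / 2 - Ffun v0) / c)) with (PI / 2 - Ffun v0) in H0 by (field; lra). lra. }
assert (Hdef : forall t, 0 <= t < tc -> defined_at nu v0 w0 t /\ 0 < vc nu v0 w0 t).
{ intros t Ht. assert (D : defined_at nu v0 w0 t) by (apply Hwin; auto). split; auto. apply vc_spec; auto. }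
exists tc. split; [auto|split; auto].
intros P [M HP].
set (V := Rmax M 1 + 1).
assert (HV : 0 < V /\ M < V) by (unfold V; pose proof (Rmax_l M 1); pose proof (Rmax_r M 1); lra).
pose proof (F_ltPI V (proj1 HV)) as HFV.
destruct (G_near nu v0 w0 tc (PI/2 - Ffun V) hnu hv0 hv1 ltac:(lra)) as [d [Hd Hn]].
assert (HGtc : G tc = PI/2).
{ unfold G. rewrite G_eq by auto. fold c. unfold tc. rewrite exp_tc by lra. unfold r. field. lra. }
apply at_left_intro. exists (Rmin d tc). split. apply Rmin_pos; auto.
intros t Ht. pose proof (Rmin_l d tc). pose proof (Rmin_r d tc).
assert (Ht' : 0 <= t < tc) by lra.
destruct (Hdef t Ht') as [D Hv]. destruct (vc_spec _ _ _ _ D) as [_ HFv].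
specialize (Hn t ltac:(rewrite Rabs_left by lra; lra)). fold G in Hn. rewrite HGtc in Hn.
assert (Hlt : V < vc nu v0 w0 t).
{ destruct (Rlt_or_le V (vc nu v0 w0 t)) as [h|h]; auto. pose proof (F_le _ _ h).
  apply Rabs_def2 in Hn. destruct Hn. unfold G in *. lra. }
apply HP. lra.
Qed.

Lemma global_ok : 0 <= Ffun v0 + c <= PI / 2 ->
  forall t, 0 < t -> defined_at nu v0 w0 t /\ 0 < vc nu v0 w0 t.
Proof.
intros H t Ht. pose proof (F_pos v0 hv0) as HF0. pose proof (F_ltPI v0 hv0) as HF1.
assert (D : defined_at nu v0 w0 t).
{ unfold defined_at. rewrite G_eq by auto. fold c.
  pose proof (exp_neg_lt1 (nu * t) ltac:(nra)). pose proof (exp_pos (- nu * t)).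
  replace (- (nu * t)) with (- nu * t) in H0 by ring. nra. }
split; auto. apply vc_spec; auto.
Qed.
End S.

Lemma omega_alg (v v0 w0 e X : R) : 0 < v -> v <> 1 -> 0 < v0 -> v0 <> 1 ->
  let a := w0 * e * (v0 / v) * ((v ^ 2 - 1) / (v0 ^ 2 - 1)) * ((v ^ 2 + 1) / (v0 ^ 2 + 1)) ^ 2 in
  let om2 : C := Cmult Ci (RtoC a) in
  let om1 : C := Cmult (Cdiv (Cmult (RtoC 2) (Cmult Ci (RtoC v))) (RtoC (1 - v ^ 2))) om2 in
  let d : C := Cminus (RtoC X) (Cmult Ci (RtoC v)) in
  let ee : C := Cminus (Copp Ci) (Cmult Ci (RtoC v)) in
  let z := Cplus (Cmult om1 (Cminus (Cinv d) (Cinv ee)))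
        (Cmult om2 (Cminus (Cinv (Cmult d d)) (Cinv (Cmult ee ee)))) in
  fst (Cplus z (Cconj z)) =
  4 * (w0 * v0 / ((v0^2-1)*(v0^2+1)^2)) * e * (v^2+1)^2 * (X * (X^2+1) / (X^2+v^2)^2).
Proof.
intros Hv Hv1 Hv0 Hv01 a om2 om1 d ee z.
assert (v^2 - 1 <> 0). { intro Hq. apply Hv1. nra. }
assert (v0^2 - 1 <> 0). { intro Hq. apply Hv01. nra. }
assert (X^2 + v^2 <> 0) by nra.
assert (v+1 <> 0) by lra.
subst z om1 om2 d ee a.
unfold Cplus, Cmult, Cminus, Cdiv, Cinv, Copp, Cconj, RtoC, Ci; simpl.
field.
repeat split; try nra.
Qed.

Definition kf (v x : R) := sin (x/2) * cos (x/2) / (sin (x/2) ^ 2 + v ^ 2 * cos (x/2) ^ 2) ^ 2.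
Definition Cfac nu v0 w0 t :=
  4 * (w0 * v0 / ((v0^2-1)*(v0^2+1)^2)) * exp (- nu * t) * (vc nu v0 w0 t ^ 2 + 1) ^ 2.

Lemma D_pos v y : 0 < v -> 0 < sin y ^ 2 + v ^ 2 * cos y ^ 2.
Proof. intro. pose proof (sin2_cos2 y). unfold Rsqr in H0.
 assert (0 < v^2) by nra. nra. Qed.

Lemma alg2 s c v : 0 < c -> 0 < s ^ 2 + v ^ 2 * c ^ 2 -> s ^ 2 + c ^ 2 = 1 ->
  s / c * ((s / c) ^ 2 + 1) / ((s / c) ^ 2 + v ^ 2) ^ 2 = s * c / (s ^ 2 + v ^ 2 * c ^ 2) ^ 2.
Proof. intros. transitivity (s * (s^2 + c^2) * c / (s ^ 2 + v ^ 2 * c ^ 2) ^ 2).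
 field. split; [nra|lra]. rewrite H1. field. nra. Qed.

Lemma omega_formula nu v0 w0 x t : 0 < v0 -> v0 <> 1 ->
  0 < vc nu v0 w0 t -> vc nu v0 w0 t <> 1 -> - PI < x < PI ->
  omega nu v0 w0 x t = Cfac nu v0 w0 t * kf (vc nu v0 w0 t) x.
Proof.
intros Hv0 Hv01 Hv Hv1 Hx.
pose proof (omega_alg (vc nu v0 w0 t) v0 w0 (exp (- nu * t)) (tan (x / 2)) Hv Hv1 Hv0 Hv01) as E.
unfold omega, omega_minus, w2i. cbv zeta in E |- *. rewrite E.
unfold Cfac, kf, tan.
assert (Hc : 0 < cos (x/2)) by (apply cos_gt_0; lra).
pose proof (D_pos (vc nu v0 w0 t) (x/2) Hv).
assert (v0^2 - 1 <> 0). { intro Hq. apply Hv01. nra. }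
rewrite alg2; auto. pose proof (sin2_cos2 (x/2)). unfold Rsqr in H1. nra.
Qed.

Lemma kf_cont v x : 0 < v -> continuity_pt (kf v) x.
Proof. intro Hv. apply derivable_continuous_pt. eexists. apply is_derive_Reals. unfold kf.
 auto_derive. pose proof (D_pos v (x/2) Hv). nra. reflexivity. Qed.

Definition jf (v x : R) := 2 * (sin (x/2) * cos (x/2)) ^ 2 / (sin (x/2) ^ 2 + v ^ 2 * cos (x/2) ^ 2) ^ 2.

Lemma jf_cont v x : 0 < v -> continuity_pt (jf v) x.
Proof. intro Hv. apply derivable_continuous_pt. eexists. apply is_derive_Reals. unfold jf.
 auto_derive. pose proof (D_pos v (x/2) Hv). nra. reflexivity. Qed.

Lemma kf_sin v x : 0 < v -> kf v x * sin x = jf v x.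
Proof. intro Hv. unfold kf, jf. assert (E : sin x = 2 * sin (x/2) * cos (x/2)) by (rewrite <- sin_2a; f_equal; field). rewrite E.
 pose proof (D_pos v (x/2) Hv). field. nra. Qed.

Lemma RInt_lb (g : R -> R) a b m : - PI <= a -> a <= b -> b <= PI ->
  (forall x, continuity_pt g x) -> (forall x, - PI <= x <= PI -> 0 <= g x) ->
  (forall x, a <= x <= b -> m <= g x) -> (b - a) * m <= RInt g (- PI) PI.
Proof.
intros Ha Hab Hb Hc Hpos Hm.
assert (Hex : forall u w, ex_RInt g u w).
{ intros. apply (ex_RInt_continuous (V := R_CompleteNormedModule)). intros. apply continuity_pt_filterlim. apply Hc. }
rewrite <- (RInt_Chasles g (-PI) a PI) by auto.
rewrite <- (RInt_Chasles g a b PI) by auto.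
unfold plus; simpl.
assert (0 <= RInt g (-PI) a) by (apply RInt_ge_0; auto; intros; apply Hpos; lra).
assert (0 <= RInt g b PI) by (apply RInt_ge_0; auto; intros; apply Hpos; lra).
assert ((b - a) * m <= RInt g a b).
{ replace ((b - a) * m) with (RInt (fun _ => m) a b).
  apply RInt_le; auto. apply ex_RInt_const. intros; apply Hm; lra.
  rewrite RInt_const. reflexivity. }
lra.
Qed.

Lemma sum_ge_term (g : nat -> R) n j : (forall i, 0 <= g i) -> (j <= n)%nat -> g j <= sum_f_R0 g n.
Proof. intros Hg. induction n; intros Hj.
 - inversion Hj. simpl. lra.
 - simpl. destruct (Nat.eq_dec j (S n)) as [e|e].
   + subst. assert (0 <= sum_f_R0 g n) by (apply cond_pos_sum; auto). lra.
   + pose proof (IHn ltac:(lia)). pose proof (Hg (S n)). lra.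
Qed.

Lemma B0_lb f m : m <= Cmod (fourier_coef f 1) -> Rbar_le m (B0norm f).
Proof.
intro Hm. unfold B0norm. rewrite <- (Lim_seq_const m) at 1.
apply Lim_seq_le_loc. exists 1%nat. intros N HN.
eapply Rle_trans. apply Hm.
set (g := fun j => Cmod (fourier_coef f (Z.of_nat j - Z.of_nat N)%Z)).
replace (Cmod (fourier_coef f 1)) with (g (N + 1)%nat).
apply sum_ge_term. intros; unfold g; apply Cmod_ge_0. lia.
unfold g. f_equal. f_equal. lia.
Qed.

Lemma coef1_lb f : Rabs (/ (2 * PI) * RInt (fun x => f x * sin x) (- PI) PI) <= Cmod (fourier_coef f 1).
Proof.
eapply Rle_trans. 2: apply Rmax_Cmod. eapply Rle_trans. 2: apply Rmax_r.
unfold fourier_coef. simpl. rewrite Rabs_Ropp.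
right. f_equal. f_equal. apply RInt_ext. intros. rewrite Rmult_1_l. reflexivity.
Qed.

Lemma trig_small y : 0 < y <= 1/2 -> y / 2 <= sin y <= y /\ 1/2 <= cos y <= 1.
Proof. intro Hy. pose proof PI2_3_2.
 split; split.
 - destruct (SIN y) as [h _]; try lra.
   assert (E : sin_lb y = y - y^3/6 + y^5/120 - y^7/5040) by (unfold sin_lb, sin_approx, sin_term; simpl; field).
   rewrite E in h. assert (y^3 <= y/4) by nra. assert (0 <= y^5) by (apply pow_le; lra).
   assert (h2 : 0 <= y^2 <= 1/4) by nra.
   assert (h6 : y^2 * y^2 * y^2 <= 1) by nra.
   assert (y^7 <= y) by (replace (y^7) with (y * (y^2*y^2*y^2)) by ring; nra). lra.
 - left; apply sin_lt_x; lra.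
 - destruct (COS y) as [h _]; try lra.
   assert (E : cos_lb y = 1 - y^2/2 + y^4/24 - y^6/720) by (unfold cos_lb, cos_approx, cos_term; simpl; field).
   rewrite E in h. assert (y^2 <= 1/4) by nra. assert (0 <= y^4) by (apply pow_le; lra). assert (h6 : y^2 * y^2 * y^2 <= 1) by nra. replace (y^6) with (y^2*y^2*y^2) by ring. lra.
 - apply COS_bound.
Qed.

Lemma frac_lb p N D q : 0 <= p <= N -> 0 < D <= q -> p / q ^ 2 <= N / D ^ 2.
Proof. intros [h1 h2] [h3 h4]. unfold Rdiv. apply Rmult_le_compat; auto.
 left. apply Rinv_0_lt_compat. nra. apply Rinv_le_contravar. nra. nra. Qed.

Lemma ptA v x : 0 < v <= 1/4 -> 2 * v <= x <= 4 * v ->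
  (v/4) / (5 * v^2) ^ 2 <= kf v x /\ 2 * (v/4)^2 / (5 * v^2) ^ 2 <= jf v x.
Proof. intros Hv Hx.
 destruct (trig_small (x/2) ltac:(lra)) as [[s1 s2] [c1 c2]].
 pose proof (D_pos v (x/2) ltac:(lra)) as HD.
 set (s := sin (x/2)) in *. set (c := cos (x/2)) in *.
 assert (Hsc : v/4 <= s * c) by nra.
 assert (h1 : s^2 <= 4 * v^2) by nra. assert (h2 : c^2 <= 1) by nra.
 assert (h3 : v^2 * c^2 <= v^2) by (assert (0 <= v^2) by nra; nra).
 assert (HDq : s^2 + v^2 * c^2 <= 5 * v^2) by lra.
 unfold kf, jf. fold s c. split.
 - apply frac_lb; split; lra.
 - apply frac_lb. split. nra. apply Rmult_le_compat_l. lra. apply pow_incr. lra. split; lra.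
Qed.

Lemma ptB u x : 0 < u <= 1/4 -> PI - 4 * u <= x <= PI - 2 * u ->
  (u/4) / 5 ^ 2 <= kf (/ u) x /\ 2 * (u/4)^2 / 5 ^ 2 <= jf (/ u) x.
Proof. intros Hu Hx.
 set (y := (PI - x) / 2).
 destruct (trig_small y ltac:(unfold y; lra)) as [[s1 s2] [c1 c2]].
 assert (E : x / 2 = PI/2 - y) by (unfold y; field).
 pose proof (D_pos (/u) (x/2) ltac:(apply Rinv_0_lt_compat; lra)) as HD.
 unfold kf, jf in *. rewrite E in *. rewrite sin_shift, cos_shift in *.
 set (s := cos y) in *. set (c := sin y) in *.
 assert (Hsc : u/4 <= s * c) by nra.
 assert (Hvc : / u * c <= 2) by (apply (Rmult_le_reg_l u); [lra|]; rewrite <- Rmult_assoc, Rinv_r by lra; lra).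
 assert (Hvc0 : 0 <= / u * c) by (apply Rmult_le_pos; [left; apply Rinv_0_lt_compat; lra|lra]).
 assert (HDq : s^2 + (/u)^2 * c^2 <= 5).
 { replace ((/u)^2 * c^2) with ((/u * c)^2) by ring. assert (s^2 <= 1) by nra. assert ((/u*c)^2 <= 4) by nra. lra. }
 split.
 - apply frac_lb; split; lra.
 - apply frac_lb. split. nra. apply Rmult_le_compat_l. lra. apply pow_incr. lra. split; lra.
Qed.

Lemma kf2_cont K v x : 0 < v -> continuity_pt (fun x => (K * kf v x) ^ 2) x.
Proof. intro Hv. apply derivable_continuous_pt. eexists. apply is_derive_Reals. unfold kf.
 auto_derive. pose proof (D_pos v (x/2) Hv). nra. reflexivity. Qed.

Lemma jf_nonneg v x : 0 < v -> 0 <= jf v x.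
Proof. intro Hv. unfold jf. pose proof (D_pos v (x/2) Hv). apply Rmult_le_pos. nra.
 left. apply Rinv_0_lt_compat. nra. Qed.

Lemma sq_le A B : 0 <= A <= Rabs B -> A ^ 2 <= B ^ 2.
Proof. intros. rewrite <- (pow2_abs B). apply pow_incr. auto. Qed.

Lemma bounds_gen nu v0 w0 t a b kl jl C0 :
  0 < v0 -> v0 <> 1 -> 0 < vc nu v0 w0 t -> vc nu v0 w0 t <> 1 ->
  - PI <= a -> a <= b -> b <= PI -> 0 <= kl -> 0 <= jl -> 0 <= C0 ->
  (forall x, a <= x <= b -> kl <= kf (vc nu v0 w0 t) x /\ jl <= jf (vc nu v0 w0 t) x) ->
  C0 <= Rabs (Cfac nu v0 w0 t) ->
  (b - a) * (C0 * kl) ^ 2 <= RInt (fun x => (omega nu v0 w0 x t) ^ 2) (- PI) PI /\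
  / (2 * PI) * (C0 * ((b - a) * jl)) <= Cmod (fourier_coef (fun x => omega nu v0 w0 x t) 1).
Proof.
intros Hv0 Hv01 Hv Hv1 Ha Hab Hb Hkl Hjl HC0 Hpt HC.
set (v := vc nu v0 w0 t) in *. set (K := Cfac nu v0 w0 t) in *.
pose proof PI_RGT_0.
split.
- rewrite (RInt_ext _ (fun x => (K * kf v x) ^ 2)).
  2:{ intros x Hx. rewrite Rmin_left, Rmax_right in Hx by lra. rewrite omega_formula; auto. }
  apply RInt_lb; auto.
  + intros; apply kf2_cont; auto.
  + intros; apply pow2_ge_0.
  + intros x Hx. destruct (Hpt x Hx) as [h _]. apply sq_le. split. apply Rmult_le_pos; auto.
    rewrite Rabs_mult. apply Rmult_le_compat; auto. eapply Rle_trans. apply h. apply Rle_abs.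
- eapply Rle_trans. 2: apply coef1_lb.
  rewrite (RInt_ext _ (fun x => K * jf v x)).
  2:{ intros x Hx. rewrite Rmin_left, Rmax_right in Hx by lra. rewrite omega_formula; auto.
      fold v K. rewrite Rmult_assoc, kf_sin; auto. }
  assert (Hex : ex_RInt (jf v) (- PI) PI).
  { apply (ex_RInt_continuous (V := R_CompleteNormedModule)). intros. apply continuity_pt_filterlim. apply jf_cont; auto. }
  assert (HR : (b - a) * jl <= RInt (jf v) (- PI) PI).
  { apply RInt_lb; auto. intros; apply jf_cont; auto. intros; apply jf_nonneg; auto. intros x Hx; apply Hpt; auto. }
  replace (RInt (fun x => K * jf v x) (- PI) PI) with (K * RInt (jf v) (- PI) PI).
  2:{ symmetry. apply (RInt_scal (V := R_CompleteNormedModule) (jf v)). auto. }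
  rewrite !Rabs_mult. rewrite (Rabs_right (/ (2*PI))) by (left; apply Rinv_0_lt_compat; lra).
  apply Rmult_le_compat_l. left; apply Rinv_0_lt_compat; lra.
  assert (0 <= (b-a) * jl) by (apply Rmult_le_pos; lra).
  rewrite (Rabs_right (RInt (jf v) (- PI) PI)) by lra.
  apply Rmult_le_compat; auto.
Qed.

Definition L2t nu v0 w0 t := RInt (fun x => (omega nu v0 w0 x t) ^ 2) (- PI) PI.
Definition Cmt nu v0 w0 t := Cmod (fourier_coef (fun x => omega nu v0 w0 x t) 1).

Lemma typeA_bound nu v0 w0 t C0 : 0 < v0 -> v0 <> 1 ->
  0 < vc nu v0 w0 t <= 1/4 -> 0 <= C0 <= Rabs (Cfac nu v0 w0 t) ->
  C0 ^ 2 / (5000 * vc nu v0 w0 t ^ 5) <= L2t nu v0 w0 t /\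
  C0 / (200 * PI * vc nu v0 w0 t) <= Cmt nu v0 w0 t.
Proof. intros Hv0 Hv01 Hv HC. set (v := vc nu v0 w0 t) in *. pose proof PI2_3_2.
 destruct (bounds_gen nu v0 w0 t (2*v) (4*v) ((v/4)/(5*v^2)^2) (2*(v/4)^2/(5*v^2)^2) C0
   Hv0 Hv01) as [h1 h2]; fold v.
 - lra.
 - intro; lra.
 - lra.
 - lra.
 - lra.
 - apply Rmult_le_pos. lra. left; apply Rinv_0_lt_compat. assert (0 < 5*v^2) by nra. nra.
 - apply Rmult_le_pos. nra. left; apply Rinv_0_lt_compat. assert (0 < 5*v^2) by nra. nra.
 - lra.
 - intros x Hx. apply ptA; auto.
 - lra.
 - unfold L2t, Cmt. fold v. split.
   + replace (C0 ^ 2 / (5000 * v ^ 5)) with ((4 * v - 2 * v) * (C0 * (v / 4 / (5 * v ^ 2) ^ 2)) ^ 2) by (field; lra). auto.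
   + replace (C0 / (200 * PI * v)) with (/ (2 * PI) * (C0 * ((4 * v - 2 * v) * (2 * (v / 4) ^ 2 / (5 * v ^ 2) ^ 2)))) by (field; lra). auto.
Qed.

Lemma typeB_bound nu v0 w0 t C0 : 0 < v0 -> v0 <> 1 ->
  0 < vc nu v0 w0 t -> 0 < / vc nu v0 w0 t <= 1/4 -> 0 <= C0 -> C0 * vc nu v0 w0 t ^ 4 <= Rabs (Cfac nu v0 w0 t) ->
  C0 ^ 2 / (5000 * (/ vc nu v0 w0 t) ^ 5) <= L2t nu v0 w0 t /\
  C0 / (200 * PI * / vc nu v0 w0 t) <= Cmt nu v0 w0 t.
Proof. intros Hv0 Hv01 Hvp Hv HC0 HC. set (v := vc nu v0 w0 t) in *. set (u := / v) in *. pose proof PI2_3_2.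
 assert (Evu : v = / u) by (unfold u; rewrite Rinv_inv; auto).
 assert (Hv1 : v <> 1). { intro e. assert (u = 1) by (unfold u; rewrite e; apply Rinv_1). lra. }
 destruct (bounds_gen nu v0 w0 t (PI - 4*u) (PI - 2*u) ((u/4)/5^2) (2*(u/4)^2/5^2) (C0 * v^4)
   Hv0 Hv01 Hvp Hv1) as [h1 h2]; fold v.
 - lra.
 - lra.
 - lra.
 - lra.
 - apply Rmult_le_pos; [nra| left; apply Rinv_0_lt_compat; nra].
 - apply Rmult_le_pos. auto. apply pow_le. lra.
 - intros x Hx. fold v. rewrite Evu. apply ptB; auto.
 - auto.
 - unfold L2t, Cmt. fold v. split.
   + replace (C0 ^ 2 / (5000 * u ^ 5)) with ((PI - 2 * u - (PI - 4 * u)) * (C0 * v ^ 4 * (u / 4 / 5 ^ 2)) ^ 2). auto.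
     rewrite Evu. field. lra.
   + replace (C0 / (200 * PI * u)) with (/ (2 * PI) * (C0 * v ^ 4 * ((PI - 2 * u - (PI - 4 * u)) * (2 * (u / 4) ^ 2 / 5 ^ 2)))). auto.
     rewrite Evu. field. lra.
Qed.

Lemma Cfac_lb nu v0 w0 t tc : 0 < nu -> 0 <= t <= tc ->
  4 * Rabs (w0 * v0 / ((v0^2-1)*(v0^2+1)^2)) * exp (- nu * tc) * (vc nu v0 w0 t ^ 2 + 1) ^ 2
  <= Rabs (Cfac nu v0 w0 t).
Proof. intros Hnu Ht. unfold Cfac. rewrite !Rabs_mult.
 rewrite (Rabs_right 4) by lra. rewrite (Rabs_right (exp (- nu * t))) by (left; apply exp_pos).
 rewrite (Rabs_right ((_ ^ 2 + 1) ^ 2)) by (left; apply pow_lt; nra).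
 apply Rmult_le_compat_r. left; apply pow_lt; nra.
 apply Rmult_le_compat_l. apply Rmult_le_pos. lra. apply Rabs_pos.
 destruct (Req_dec t tc). subst; lra. left. apply exp_increasing. nra.
Qed.

Lemma final_L2 C p M : 0 < C -> 0 < p <= 1 -> p < C ^ 2 / (5000 * (M ^ 2 + 1)) ->
  M < sqrt (C ^ 2 / (5000 * p ^ 5)).
Proof. intros HC Hp Hpp.
 assert (H1 : 5000 * p * (M^2+1) < C^2).
 { apply (Rmult_lt_compat_r (5000 * (M^2+1))) in Hpp. 2: nra.
   replace (C ^ 2 / (5000 * (M ^ 2 + 1)) * (5000 * (M ^ 2 + 1))) with (C^2) in Hpp by (field; nra). nra. }
 assert (H5 : p ^ 5 <= p).
 { replace (p^5) with (p * (p^2*p^2)) by ring. assert (h0 : 0 <= p^2 <= 1) by nra. assert (p^2*p^2 <= 1) by nra. nra. }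
 assert (H2 : M ^ 2 + 1 <= C ^ 2 / (5000 * p ^ 5)).
 { assert (0 < p^5) by (apply pow_lt; lra).
   apply (Rmult_le_reg_r (5000 * p^5)). nra.
   replace (C ^ 2 / (5000 * p ^ 5) * (5000 * p ^ 5)) with (C^2) by (field; lra). nra. }
 destruct (Rlt_or_le M 0). pose proof (sqrt_pos (C ^ 2 / (5000 * p ^ 5))). lra.
 rewrite <- (sqrt_pow2 M) by auto. apply sqrt_lt_1_alt. split. nra. lra.
Qed.

Lemma final_B0 C p M : 0 < C -> 0 < p -> p < C / (800 * (Rabs M + 1)) -> M < C / (200 * PI * p).
Proof. intros HC Hp Hpp. pose proof PI_4. pose proof PI_RGT_0. pose proof (Rabs_pos M). pose proof (Rle_abs M).
 assert (Hq : 800 * p * (Rabs M + 1) < C).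
 { apply (Rmult_lt_compat_r (800 * (Rabs M + 1))) in Hpp. 2: nra.
   replace (C / (800 * (Rabs M + 1)) * (800 * (Rabs M + 1))) with C in Hpp by (field; lra). nra. }
 apply (Rmult_lt_reg_r (200 * PI * p)). nra.
 replace (C / (200 * PI * p) * (200 * PI * p)) with C by (field; lra).
 assert (h1 : 0 < 200*PI*p <= 800*p) by (split; nra).
 assert (h2 : M * (200*PI*p) <= (Rabs M + 1) * (800 * p)) by nra. lra.
Qed.

Lemma finish nu v0 w0 tc C0 (p : R -> R) : 0 < C0 ->
  (forall d, 0 < d -> at_left tc (fun t => 0 < p t < d)) ->
  at_left tc (fun t => 0 < p t <= 1/4 -> C0 ^ 2 / (5000 * p t ^ 5) <= L2t nu v0 w0 t /\
                         C0 / (200 * PI * p t) <= Cmt nu v0 w0 t) ->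
  filterlim (fun t => L2norm (fun x => omega nu v0 w0 x t)) (at_left tc) (Rbar_locally p_infty)
  /\ (forall M : R, at_left tc (fun t => Rbar_lt (Finite M) (B0norm (fun x => omega nu v0 w0 x t)))).
Proof.
intros HC0 Hev Hbd. split.
- intros P [M HM]. unfold filtermap.
  set (d := Rmin (1/4) (C0 ^ 2 / (5000 * (M ^ 2 + 1)))).
  assert (Hd : 0 < d). { unfold d. apply Rmin_pos. lra. apply Rdiv_lt_0_compat. nra. nra. }
  generalize (filter_and _ _ (Hev d Hd) Hbd). apply filter_imp.
  intros t [[h1 h2] h3]. assert (hd1 : d <= 1/4) by apply Rmin_l. assert (hd2 : d <= C0 ^ 2 / (5000 * (M ^ 2 + 1))) by apply Rmin_r.
  destruct (h3 ltac:(lra)) as [b1 _].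
  apply HM. unfold L2norm. fold (L2t nu v0 w0 t).
  eapply Rlt_le_trans. apply (final_L2 C0 (p t) M); auto. lra. lra.
  apply sqrt_le_1_alt. auto.
- intros M.
  set (d := Rmin (1/4) (C0 / (800 * (Rabs M + 1)))).
  assert (Hd : 0 < d). { unfold d. apply Rmin_pos. lra. apply Rdiv_lt_0_compat. lra. pose proof (Rabs_pos M). lra. }
  generalize (filter_and _ _ (Hev d Hd) Hbd). apply filter_imp.
  intros t [[h1 h2] h3]. assert (hd1 : d <= 1/4) by apply Rmin_l. assert (hd2 : d <= C0 / (800 * (Rabs M + 1))) by apply Rmin_r.
  destruct (h3 ltac:(lra)) as [_ b2].
  assert (HM : M < C0 / (200 * PI * p t)) by (apply final_B0; auto; lra).
  pose proof (B0_lb (fun x => omega nu v0 w0 x t) (C0 / (200 * PI * p t)) b2) as HB.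
  destruct (B0norm (fun x => omega nu v0 w0 x t)); simpl in *; auto; lra.
Qed.

Lemma w0_nz nu v0 w0 : 0 < nu -> 0 < v0 -> v0 <> 1 -> cG nu v0 w0 <> 0 ->
  0 < 4 * Rabs (w0 * v0 / ((v0^2-1)*(v0^2+1)^2)).
Proof. intros Hnu Hv0 Hv1 Hc. pose proof (v0sq v0 Hv0 Hv1).
 assert (w0 * v0 / ((v0^2-1)*(v0^2+1)^2) <> 0).
 { intro e. apply Hc. unfold cG.
   replace (2 * w0 * v0 / (nu * (v0 ^ 2 - 1) * (v0 ^ 2 + 1) ^ 2)) with (2 / nu * (w0 * v0 / ((v0 ^ 2 - 1) * (v0 ^ 2 + 1) ^ 2))) by (field; split; [nra|split; lra]).
   rewrite e. ring. }
 pose proof (Rabs_pos_lt _ H0). lra. Qed.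

Lemma iii_A nu v0 w0 tc : 0 < nu -> 0 < v0 -> v0 <> 1 -> blowupA_at nu v0 w0 tc ->
  filterlim (fun t => L2norm (fun x => omega nu v0 w0 x t)) (at_left tc) (Rbar_locally p_infty)
  /\ (forall M : R, at_left tc (fun t => Rbar_lt (Finite M) (B0norm (fun x => omega nu v0 w0 x t)))).
Proof.
intros Hnu Hv0 Hv1 H.
pose proof (A_nec nu v0 w0 Hnu Hv0 Hv1 tc H) as HA. pose proof (F_pos v0 Hv0).
assert (Hc : cG nu v0 w0 <> 0) by (intro e; rewrite e in HA; lra).
pose proof (w0_nz nu v0 w0 Hnu Hv0 Hv1 Hc) as HK.
set (C0 := 4 * Rabs (w0 * v0 / ((v0^2-1)*(v0^2+1)^2)) * exp (- nu * tc)).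
assert (HC0 : 0 < C0) by (unfold C0; apply Rmult_lt_0_compat; [lra| apply exp_pos]).
destruct H as [Htc [Hdef Hlim]].
apply (finish nu v0 w0 tc C0 (vc nu v0 w0)); auto.
- intros d Hd. apply (Hlim (fun z => 0 < z < d)). exists (mkposreal d Hd). intros y Hy Hy0.
  assert (Hy' : Rabs (y - 0) < d) by (apply ball_R in Hy; exact Hy).
  rewrite Rminus_0_r in Hy'. split; auto. pose proof (Rle_abs y). lra.
- apply at_left_intro. exists tc. split; auto. intros t Ht Hv.
  apply typeA_bound; auto. split. lra.
  eapply Rle_trans. 2: apply (Cfac_lb nu v0 w0 t tc); [auto|lra].
  fold C0. assert (1 <= (vc nu v0 w0 t ^ 2 + 1) ^ 2) by nra. nra.
Qed.

Lemma iii_B nu v0 w0 tc : 0 < nu -> 0 < v0 -> v0 <> 1 -> blowupB_at nu v0 w0 tc ->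
  filterlim (fun t => L2norm (fun x => omega nu v0 w0 x t)) (at_left tc) (Rbar_locally p_infty)
  /\ (forall M : R, at_left tc (fun t => Rbar_lt (Finite M) (B0norm (fun x => omega nu v0 w0 x t)))).
Proof.
intros Hnu Hv0 Hv1 H.
pose proof (B_nec nu v0 w0 Hnu Hv0 Hv1 tc H) as HB. pose proof (F_ltPI v0 Hv0).
assert (Hc : cG nu v0 w0 <> 0) by (intro e; rewrite e in HB; lra).
pose proof (w0_nz nu v0 w0 Hnu Hv0 Hv1 Hc) as HK.
set (C0 := 4 * Rabs (w0 * v0 / ((v0^2-1)*(v0^2+1)^2)) * exp (- nu * tc)).
assert (HC0 : 0 < C0) by (unfold C0; apply Rmult_lt_0_compat; [lra| apply exp_pos]).
destruct H as [Htc [Hdef Hlim]].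
apply (finish nu v0 w0 tc C0 (fun t => / vc nu v0 w0 t)); auto.
- intros d Hd.
  assert (Hl : at_left tc (fun t => / d < vc nu v0 w0 t)).
  { apply (Hlim (fun z => / d < z)). exists (/ d). auto. }
  generalize Hl. apply filter_imp. intros t Ht.
  assert (0 < / d) by (apply Rinv_0_lt_compat; auto).
  split. apply Rinv_0_lt_compat; lra.
  rewrite <- (Rinv_inv d). apply Rinv_lt_contravar. nra. auto.
- apply at_left_intro. exists tc. split; auto. intros t Ht Hv.
  destruct (Hdef t ltac:(lra)) as [_ Hvp].
  apply typeB_bound; auto. lra.
  eapply Rle_trans. 2: apply (Cfac_lb nu v0 w0 t tc); [auto|lra].
  fold C0. assert (vc nu v0 w0 t ^ 4 <= (vc nu v0 w0 t ^ 2 + 1) ^ 2) by nra. nra.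
Qed.

Theorem theorem3p7 (nu v0 w0 : R) (hnu : 0 < nu) (hv0 : 0 < v0) (hv1 : v0 <> 1) :
  (* (i) *)
  (blowupA nu v0 w0 <->
     ((0 < v0 < 1 /\ w0 > - (nu / 2) * f0 v0) \/ (v0 > 1 /\ w0 < - (nu / 2) * f0 v0)))
  /\
  (* (ii) *)
  (blowupB nu v0 w0 <->
     ((0 < v0 < 1 /\ w0 < - (nu / 2) * finf v0) \/ (v0 > 1 /\ w0 > - (nu / 2) * finf v0)))
  /\
  (* (iii) *)
  (forall tc, blowupA_at nu v0 w0 tc \/ blowupB_at nu v0 w0 tc ->
     filterlim (fun t => L2norm (fun x => omega nu v0 w0 x t)) (at_left tc)
               (Rbar_locally p_infty)
     /\ (forall M : R, at_left tc
           (fun t => Rbar_lt (Finite M) (B0norm (fun x => omega nu v0 w0 x t)))))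
  /\
  (* (iv) *)
  (((0 < v0 < 1 /\ - (nu / 2) * finf v0 <= w0 <= - (nu / 2) * f0 v0)
    \/ (v0 > 1 /\ - (nu / 2) * f0 v0 <= w0 <= - (nu / 2) * finf v0)) ->
     ~ blowupA nu v0 w0 /\ ~ blowupB nu v0 w0
     /\ (forall t, 0 < t -> defined_at nu v0 w0 t /\ 0 < vc nu v0 w0 t)).
Proof.
pose proof (condA_iff nu v0 w0 hnu hv0 hv1) as CA.
pose proof (condB_iff nu v0 w0 hnu hv0 hv1) as CB.
split; [|split; [|split]].
- split.
  + intros [tc H]. apply CA. apply (A_nec nu v0 w0 hnu hv0 hv1 tc H).
  + intro H. apply (A_suff nu v0 w0 hnu hv0 hv1). apply CA; auto.
- split.
  + intros [tc H]. apply CB. apply (B_nec nu v0 w0 hnu hv0 hv1 tc H).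
  + intro H. apply (B_suff nu v0 w0 hnu hv0 hv1). apply CB; auto.
- intros tc [H|H]. apply iii_A; auto. apply iii_B; auto.
- intro H.
  assert (nA : ~ (Ffun v0 + cG nu v0 w0 < 0)).
  { intro h. apply CA in h. destruct H as [[a b]|[a b]]; destruct h as [[c d]|[c d]]; lra. }
  assert (nB : ~ (Ffun v0 + cG nu v0 w0 > PI / 2)).
  { intro h. apply CB in h. destruct H as [[a b]|[a b]]; destruct h as [[c d]|[c d]]; lra. }
  split; [|split].
  + intros [tc Ht]. apply nA. apply (A_nec nu v0 w0 hnu hv0 hv1 tc Ht).
  + intros [tc Ht]. apply nB. apply (B_nec nu v0 w0 hnu hv0 hv1 tc Ht).
  + apply global_ok; auto. lra.
Qed.
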